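(* Let $\Lambda\ge1$ and let $K_0,\dots,K_\Lambda$ be non-negative integers. For $\lambda\in\{1,\dots,\Lambda\}$ define $f_\lambda:[0,\Lambda]\to\mathbb R$ by \[ f_\lambda(t)=K_\lambda\prod_{i=0}^{\lambda-1}\frac{\Lambda-t-i}{t+\lambda-i}\quad\text{for }0\le t\le \Lambda-\lambda+1,\qquad f_\lambda(t)=0\quad\text{for }\Lambda-\lambda+1\le t\le\Lambda, \] and let $f(t)=K_0+\sum_{\lambda=1}^{\Lambda}f_\lambda(t)$. Then $f$ is convex and non-increasing on $[0,\Lambda]$, and for every integer $t\in\{0,\dots,\Lambda\}$ one has $f(t)=\sum_{\lambda=0}^{\Lambda-t}K_\lambda\binom{\Lambda}{t+\lambda}/\binom{\Lambda}{t}$. In particular the sequence $t\mapsto\sum_{\lambda=0}^{\Lambda-t}K_\lambda\binom{\Lambda}{t+\lambda}/\binom{\Lambda}{t}$, $t\in\{0,\dots,\Lambda\}$, is convex and non-increasing.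
   Context: Convention: $\binom{n}{k}=0$ if $n<0$, $k<0$ or $n<k$. The two formulas defining $f_\lambda$ agree at $t=\Lambda-\lambda+1$ (both equal $0$). *)

(* Defs.v *)
From Stdlib Require Import Reals Lra Lia.
Open Scope R_scope.

Fixpoint prod_upto (n : nat) (g : nat -> R) : R :=
  match n with
  | O => 1
  | S m => prod_upto m g * g m
  end.

Fixpoint sum_upto (n : nat) (g : nat -> R) : R :=
  match n with
  | O => 0
  | S m => sum_upto m g + g m
  end.

Definition binomR (n k : nat) : R :=
  if Nat.leb k n then C n k else 0.

Definition f_lam (Lam : nat) (K : nat -> nat) (lam : nat) (t : R) : R :=
  if Rle_dec t (INR Lam - INR lam + 1) then
    INR (K lam) *
      prod_upto lam (fun i => (INR Lam - t - INR i) / (t + INR lam - INR i))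
  else 0.

Definition f_tot (Lam : nat) (K : nat -> nat) (t : R) : R :=
  INR (K 0%nat) + sum_upto Lam (fun j => f_lam Lam K (S j) t).

Definition convex_on (a b : R) (g : R -> R) : Prop :=
  forall x y s, a <= x <= b -> a <= y <= b -> 0 <= s <= 1 ->
    g (s * x + (1 - s) * y) <= s * g x + (1 - s) * g y.

Definition nonincreasing_on (a b : R) (g : R -> R) : Prop :=
  forall x y, a <= x <= b -> a <= y <= b -> x <= y -> g y <= g x.

Definition seq_val (Lam : nat) (K : nat -> nat) (t : nat) : R :=
  sum_upto (S (Lam - t)) (fun lam => INR (K lam) * binomR Lam (t + lam))
  / binomR Lam t.

Definition seq_convex_noninc (Lam : nat) (a : nat -> R) : Prop :=
  (forall t, (t + 1 <= Lam)%nat -> a (S t) <= a t) /\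
  (forall t, (t + 2 <= Lam)%nat -> a (S t) - a t <= a (S (S t)) - a (S t)).

(* Main.v *)
Require Import Defs.
From Stdlib Require Import Reals Lra Lia.
Open Scope R_scope.

Definition good (c : R) (F : R -> R) :=
  convex_on 0 c F /\ nonincreasing_on 0 c F /\ (forall t, 0 <= t <= c -> 0 <= F t).

Lemma comb_le a b x y s : a <= x -> b <= y -> 0 <= s <= 1 ->
  s * a + (1 - s) * b <= s * x + (1 - s) * y.
Proof. intros. nra. Qed.

Lemma comb_in c x y s : 0 <= x <= c -> 0 <= y <= c -> 0 <= s <= 1 ->
  0 <= s * x + (1 - s) * y <= c.
Proof.
  intros Hx Hy Hs. split.
  - replace 0 with (s*0 + (1-s)*0) by ring. apply comb_le; lra.
  - replace c with (s*c + (1-s)*c) by ring. apply comb_le; lra.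
Qed.

Lemma good_mul c F G : good c F -> good c G -> good c (fun t => F t * G t).
Proof.
  intros [cF [nF pF]] [cG [nG pG]]. split; [|split].
  - intros x y s Hx Hy Hs.
    pose proof (comb_in c x y s Hx Hy Hs) as Hz.
    pose proof (cF x y s Hx Hy Hs). pose proof (cG x y s Hx Hy Hs).
    pose proof (pF _ Hz). pose proof (pG _ Hz).
    pose proof (pF _ Hx). pose proof (pF _ Hy). pose proof (pG _ Hx). pose proof (pG _ Hy).
    set (z := s*x+(1-s)*y) in *.
    assert (HH1 : F z * G z <= (s * F x + (1 - s) * F y) * (s * G x + (1 - s) * G y))
      by (apply Rmult_le_compat; lra).
    assert (HH2 : 0 <= (F x - F y) * (G x - G y)).
    { destruct (Rle_dec x y) as [Hl|Hl].
      - pose proof (nF x y Hx Hy Hl). pose proof (nG x y Hx Hy Hl).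
        apply Rmult_le_pos; lra.
      - assert (y <= x) by lra.
        assert (Hyx : y <= x) by lra; pose proof (nF y x Hy Hx Hyx); pose proof (nG y x Hy Hx Hyx).
        replace ((F x - F y) * (G x - G y)) with ((F y - F x) * (G y - G x)) by ring.
        apply Rmult_le_pos; lra. }
    assert (HH3 : 0 <= s * (1 - s) * ((F x - F y) * (G x - G y)))
      by (apply Rmult_le_pos; [apply Rmult_le_pos|]; lra).
    assert (E : s * (F x * G x) + (1 - s) * (F y * G y) -
      (s * F x + (1 - s) * F y) * (s * G x + (1 - s) * G y) =
      s * (1 - s) * ((F x - F y) * (G x - G y))) by ring.
    lra.
  - intros x y Hx Hy Hxy. pose proof (nF x y Hx Hy Hxy). pose proof (nG x y Hx Hy Hxy).
    apply Rmult_le_compat; auto.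
  - intros t Ht. apply Rmult_le_pos; auto.
Qed.

Lemma good_const c k : 0 <= k -> good c (fun _ => k).
Proof.
  intros Hk. split; [|split].
  - intros x y s _ _ _. lra.
  - intros x y _ _ _. lra.
  - intros; lra.
Qed.

Lemma inv_convex X Y s : 0 < X -> 0 < Y -> 0 <= s <= 1 ->
  / (s * X + (1 - s) * Y) <= s * / X + (1 - s) * / Y.
Proof.
  intros HX HY Hs.
  assert (HZ : 0 < s * X + (1 - s) * Y) by nra.
  assert (E : s * / X + (1 - s) * / Y - / (s * X + (1 - s) * Y) =
     s * (1 - s) * (X - Y)^2 * / (X * Y * (s * X + (1 - s) * Y))).
  { field. lra. }
  assert (0 <= s * (1 - s) * (X - Y)^2 * / (X * Y * (s * X + (1 - s) * Y))).
  { apply Rmult_le_pos. apply Rmult_le_pos. apply Rmult_le_pos; lra.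
    pose proof (pow2_ge_0 (X - Y)); lra.
    left. apply Rinv_0_lt_compat. apply Rmult_lt_0_compat; [apply Rmult_lt_0_compat|]; lra. }
  lra.
Qed.

Lemma good_frac c A B : 0 < B -> c <= A -> 0 <= c ->
  good c (fun t => (A - t) / (t + B)).
Proof.
  intros HB HA Hc.
  assert (E : forall t, 0 <= t -> (A - t) / (t + B) = (A + B) * / (t + B) - 1).
  { intros t Ht. field. lra. }
  split; [|split].
  - intros x y s Hx Hy Hs. pose proof (comb_in c x y s Hx Hy Hs) as Hz.
    rewrite !E by lra.
    pose proof (inv_convex (x + B) (y + B) s ltac:(lra) ltac:(lra) Hs) as Hi.
    replace (s * (x + B) + (1 - s) * (y + B)) with (s * x + (1 - s) * y + B) in Hi by ring.
    assert (H : (A + B) * / (s * x + (1 - s) * y + B) <=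
       (A + B) * (s * / (x + B) + (1 - s) * / (y + B)))
      by (apply Rmult_le_compat_l; lra).
    replace (s * ((A + B) * / (x + B) - 1) + (1 - s) * ((A + B) * / (y + B) - 1))
      with ((A + B) * (s * / (x + B) + (1 - s) * / (y + B)) - 1) by ring.
    lra.
  - intros x y Hx Hy Hxy. rewrite !E by lra.
    assert (/ (y + B) <= / (x + B)) by (apply Rinv_le_contravar; lra).
    assert ((A + B) * / (y + B) <= (A + B) * / (x + B)) by (apply Rmult_le_compat_l; lra).
    lra.
  - intros t Ht. unfold Rdiv. apply Rmult_le_pos. lra.
    left; apply Rinv_0_lt_compat; lra.
Qed.

Lemma good_prod c (g : nat -> R -> R) m :
  (forall i, (i < m)%nat -> good c (g i)) ->
  good c (fun t => prod_upto m (fun i => g i t)).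
Proof.
  induction m as [|m IH]; intros H.
  - apply (good_const c 1); lra.
  - apply (good_mul c (fun t => prod_upto m (fun i => g i t)) (g m)).
    apply IH; intros; apply H; lia. apply H; lia.
Qed.

Lemma good_min c L F : good c F -> 0 <= c ->
  convex_on 0 L (fun t => F (Rmin t c)) /\ nonincreasing_on 0 L (fun t => F (Rmin t c)).
Proof.
  intros [cF [nF pF]] Hc.
  assert (Hm : forall x, 0 <= x -> 0 <= Rmin x c <= c).
  { intros x Hx. split. apply Rmin_glb; lra. apply Rmin_r. }
  split.
  - intros x y s Hx Hy Hs.
    pose proof (Hm x ltac:(lra)). pose proof (Hm y ltac:(lra)).
    pose proof (comb_in c _ _ s H H0 Hs) as Hw.
    assert (Hz : 0 <= s * x + (1 - s) * y) by (pose proof (comb_le 0 0 x y s); lra).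
    pose proof (Hm _ Hz) as Hz'.
    assert (Hle : s * Rmin x c + (1 - s) * Rmin y c <= Rmin (s * x + (1 - s) * y) c).
    { apply Rmin_glb. apply comb_le; auto; apply Rmin_l. lra. }
    pose proof (nF _ _ Hw Hz' Hle). pose proof (cF _ _ s H H0 Hs). lra.
  - intros x y Hx Hy Hxy. apply nF; try (apply Hm; lra).
    apply Rmin_glb. pose proof (Rmin_l x c); lra. apply Rmin_r.
Qed.

Lemma prod_upto_ext n f g : (forall i, (i < n)%nat -> f i = g i) -> prod_upto n f = prod_upto n g.
Proof. induction n; simpl; intros H; auto. rewrite IHn, H; auto. Qed.

Lemma conv_ext L F G : (forall t, F t = G t) -> convex_on 0 L F -> convex_on 0 L G.
Proof. intros E H x y s a b c. rewrite <- !E. auto. Qed.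
Lemma noninc_ext L F G : (forall t, F t = G t) -> nonincreasing_on 0 L F -> nonincreasing_on 0 L G.
Proof. intros E H x y a b c. rewrite <- !E. auto. Qed.

Lemma conv_add L F G : convex_on 0 L F -> convex_on 0 L G -> convex_on 0 L (fun t => F t + G t).
Proof. intros HF HG x y s a b c. pose proof (HF x y s a b c). pose proof (HG x y s a b c). lra. Qed.
Lemma noninc_add L F G : nonincreasing_on 0 L F -> nonincreasing_on 0 L G ->
  nonincreasing_on 0 L (fun t => F t + G t).
Proof. intros HF HG x y a b c. pose proof (HF x y a b c). pose proof (HG x y a b c). lra. Qed.

Lemma sum_good L (F : nat -> R -> R) m :
  (forall j, (j < m)%nat -> convex_on 0 L (F j) /\ nonincreasing_on 0 L (F j)) ->
  convex_on 0 L (fun t => sum_upto m (fun j => F j t)) /\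
  nonincreasing_on 0 L (fun t => sum_upto m (fun j => F j t)).
Proof.
  induction m as [|m IH]; intros H.
  - split; [intros x y s _ _ _ | intros x y _ _ _]; simpl; lra.
  - destruct IH as [c1 n1]. intros; apply H; lia.
    destruct (H m ltac:(lia)) as [c2 n2].
    split.
    + apply (conv_add L (fun t => sum_upto m (fun j => F j t)) (F m)); auto.
    + apply (noninc_add L (fun t => sum_upto m (fun j => F j t)) (F m)); auto.
Qed.

Definition gfac (Lam j i : nat) (u : R) := (INR Lam - INR i - u) / (u + (INR (S j) - INR i)).

Lemma f_lam_repr Lam K j t :
  f_lam Lam K (S j) t = INR (K (S j)) *
    prod_upto (S j) (fun i => gfac Lam j i (Rmin t (INR Lam - INR (S j) + 1))).
Proof.
  unfold f_lam. destruct (Rle_dec t (INR Lam - INR (S j) + 1)) as [Hl|Hl].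
  - rewrite Rmin_left by auto. f_equal. apply prod_upto_ext. intros i _.
    unfold gfac. f_equal; ring.
  - rewrite Rmin_right by lra. cbn [prod_upto].
    unfold gfac at 2. rewrite S_INR.
    replace (INR Lam - INR j - (INR Lam - (INR j + 1) + 1)) with 0 by ring.
    unfold Rdiv. ring.
Qed.

Lemma f_lam_good Lam K j : (S j <= Lam)%nat ->
  convex_on 0 (INR Lam) (f_lam Lam K (S j)) /\ nonincreasing_on 0 (INR Lam) (f_lam Lam K (S j)).
Proof.
  intros Hj.
  set (c := INR Lam - INR (S j) + 1).
  assert (Hc : 0 <= c).
  { unfold c. pose proof (le_INR _ _ Hj). lra. }
  assert (G : good c (fun u => INR (K (S j)) * prod_upto (S j) (fun i => gfac Lam j i u))).
  { apply (good_mul c (fun _ => INR (K (S j)))).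
    apply good_const, pos_INR.
    apply (good_prod c (fun i u => gfac Lam j i u)).
    intros i Hi. unfold gfac.
    apply (good_frac c (INR Lam - INR i) (INR (S j) - INR i)).
    pose proof (lt_INR _ _ Hi); lra.
    unfold c. assert (i <= j)%nat by lia. apply le_INR in H. rewrite S_INR. lra.
    auto. }
  destruct (good_min c (INR Lam) _ G Hc) as [G1 G2].
  split.
  - eapply conv_ext; [|exact G1]. intros t. simpl. rewrite f_lam_repr. reflexivity.
  - eapply noninc_ext; [|exact G2]. intros t. simpl. rewrite f_lam_repr. reflexivity.
Qed.

Lemma ftot_good Lam K :
  convex_on 0 (INR Lam) (f_tot Lam K) /\ nonincreasing_on 0 (INR Lam) (f_tot Lam K).
Proof.
  destruct (sum_good (INR Lam) (fun j => f_lam Lam K (S j)) Lam) as [c1 n1].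
  intros j Hj. apply f_lam_good. lia.
  unfold f_tot. split.
  - apply (conv_add _ (fun _ => INR (K 0%nat)) (fun t => sum_upto Lam (fun j => f_lam Lam K (S j) t))); auto.
    intros x y s _ _ _. lra.
  - apply (noninc_add _ (fun _ => INR (K 0%nat)) (fun t => sum_upto Lam (fun j => f_lam Lam K (S j) t))); auto.
    intros x y _ _ _. lra.
Qed.

Lemma prod_shift n g : prod_upto (S n) g = g 0%nat * prod_upto n (fun i => g (S i)).
Proof. induction n; cbn [prod_upto] in *. ring. rewrite IHn. ring. Qed.

Lemma sum_shift n g : sum_upto (S n) g = g 0%nat + sum_upto n (fun i => g (S i)).
Proof. induction n; cbn [sum_upto] in *. ring. rewrite IHn. ring. Qed.

Lemma prod_div n a b : prod_upto n (fun i => a i / b i) = prod_upto n a / prod_upto n b.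
Proof. induction n; cbn [prod_upto]. field. rewrite IHn. unfold Rdiv. rewrite Rinv_mult. ring. Qed.

Lemma sum_div n g b : sum_upto n g / b = sum_upto n (fun i => g i / b).
Proof. induction n; cbn [sum_upto]. unfold Rdiv; ring. rewrite <- IHn. unfold Rdiv; ring. Qed.

Lemma sum_upto_ext n f g : (forall i, (i < n)%nat -> f i = g i) -> sum_upto n f = sum_upto n g.
Proof. induction n; simpl; intros H; auto. rewrite IHn, H; auto. Qed.

Lemma sum_extend h n m : (m <= n)%nat -> (forall l, (m <= l < n)%nat -> h l = 0) ->
  sum_upto m h = sum_upto n h.
Proof.
  induction n; intros Hm H.
  - assert (m = 0%nat) by lia. subst; auto.
  - destruct (Nat.eq_dec m (S n)). subst; auto.
    cbn [sum_upto]. rewrite <- IHn by (auto; lia || (intros; apply H; lia)).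
    rewrite H by lia. ring.
Qed.

Lemma prod_pos n g : (forall i, (i < n)%nat -> 0 < g i) -> 0 < prod_upto n g.
Proof. induction n; cbn [prod_upto]; intros H. lra. apply Rmult_lt_0_compat; auto. Qed.

Lemma C_pos n k : (k <= n)%nat -> 0 < C n k.
Proof.
  intros _. unfold C. unfold Rdiv. apply Rmult_lt_0_compat. apply INR_fact_lt_0.
  apply Rinv_0_lt_compat. apply Rmult_lt_0_compat; apply INR_fact_lt_0.
Qed.

Lemma C_step n k : (S k <= n)%nat -> C n k * (INR n - INR k) = (INR k + 1) * C n (S k).
Proof.
  intros H. unfold C.
  replace (n - k)%nat with (S (n - S k)) by lia.
  cbn [Factorial.fact]. rewrite !mult_INR.
  replace (INR (S (n - S k))) with (INR n - INR k) by (rewrite S_INR, minus_INR by lia; rewrite S_INR; ring).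
  rewrite S_INR.
  assert (INR n - INR k <> 0).
  { apply le_INR in H. rewrite S_INR in H. lra. }
  pose proof (INR_fact_neq_0 k). pose proof (INR_fact_neq_0 n). pose proof (INR_fact_neq_0 (n - S k)).
  pose proof (pos_INR k).
  field. repeat split; auto; lra.
Qed.

Lemma key_prod Lam t lam : (t + lam <= Lam)%nat ->
  prod_upto lam (fun i => INR Lam - INR t - INR i) * C Lam t =
  prod_upto lam (fun i => INR t + INR lam - INR i) * C Lam (t + lam).
Proof.
  induction lam as [|l IH]; intros H.
  - cbn [prod_upto]. rewrite Nat.add_0_r. ring.
  - rewrite (prod_shift l (fun i => INR t + INR (S l) - INR i)).
    rewrite (prod_upto_ext l (fun i => INR t + INR (S l) - INR (S i)) (fun i => INR t + INR l - INR i))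
      by (intros; rewrite !S_INR; ring).
    cbn [prod_upto].
    replace (prod_upto l (fun i => INR Lam - INR t - INR i) * (INR Lam - INR t - INR l) * C Lam t)
      with ((prod_upto l (fun i => INR Lam - INR t - INR i) * C Lam t) * (INR Lam - INR t - INR l)) by ring.
    rewrite IH by lia.
    rewrite Nat.add_succ_r.
    pose proof (C_step Lam (t + l) ltac:(lia)) as E. rewrite plus_INR in E.
    replace (INR Lam - INR t - INR l) with (INR Lam - (INR t + INR l)) by ring.
    rewrite Rmult_assoc, E. rewrite S_INR. change (INR 0) with 0. ring.
Qed.

Lemma binomR_C n k : (k <= n)%nat -> binomR n k = C n k.
Proof. intros H. unfold binomR. apply Nat.leb_le in H. rewrite H. auto. Qed.
Lemma binomR_0 n k : (n < k)%nat -> binomR n k = 0.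
Proof. intros H. unfold binomR. destruct (Nat.leb_spec k n); [lia|auto]. Qed.

Lemma f_lam_int Lam K j t : (t <= Lam)%nat -> (S j <= Lam)%nat ->
  f_lam Lam K (S j) (INR t) = INR (K (S j)) * binomR Lam (t + S j) / binomR Lam t.
Proof.
  intros Ht Hj. rewrite (binomR_C Lam t Ht).
  pose proof (C_pos Lam t Ht) as Cp.
  unfold f_lam. destruct (Compare_dec.le_lt_dec (t + S j) Lam) as [Hle|Hgt].
  - rewrite binomR_C by auto.
    destruct (Rle_dec (INR t) (INR Lam - INR (S j) + 1)) as [Hl|Hl].
    + rewrite prod_div.
      pose proof (key_prod Lam t (S j) Hle) as E.
      assert (Dp : 0 < prod_upto (S j) (fun i => INR t + INR (S j) - INR i)).
      { apply prod_pos. intros i Hi. apply lt_INR in Hi. pose proof (pos_INR t). lra. }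
      apply (Rmult_eq_reg_r (prod_upto (S j) (fun i => INR t + INR (S j) - INR i) * C Lam t)).
      2: { apply Rgt_not_eq. apply Rmult_lt_0_compat; lra. }
      field_simplify; try lra. rewrite !Rmult_assoc, E. ring.
    + exfalso. apply Hl. apply le_INR in Hle. rewrite plus_INR in Hle. lra.
  - rewrite binomR_0 by lia.
    destruct (Rle_dec (INR t) (INR Lam - INR (S j) + 1)) as [Hl|Hl].
    + assert (t = (Lam - j)%nat).
      { rewrite S_INR in Hl. replace (INR Lam - (INR j + 1) + 1) with (INR (Lam - j)) in Hl
          by (rewrite minus_INR by lia; ring).
        apply INR_le in Hl. lia. }
      subst t. cbn [prod_upto]. rewrite minus_INR by lia.
      replace (INR Lam - (INR Lam - INR j) - INR j) with 0 by ring. unfold Rdiv. ring.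
    + unfold Rdiv; ring.
Qed.

Lemma ftot_int Lam K t : (t <= Lam)%nat -> f_tot Lam K (INR t) = seq_val Lam K t.
Proof.
  intros Ht. unfold f_tot, seq_val.
  pose proof (C_pos Lam t Ht) as Cp.
  rewrite (sum_extend _ (S Lam) (S (Lam - t))) by
    (lia || (intros l Hl; rewrite binomR_0 by lia; ring)).
  rewrite sum_shift. unfold Rdiv. rewrite Rmult_plus_distr_r.
  rewrite Nat.add_0_r, (binomR_C Lam t Ht).
  fold (Rdiv (sum_upto Lam (fun i => INR (K (S i)) * binomR Lam (t + S i))) (C Lam t)).
  rewrite sum_div.
  f_equal. field. lra.
  apply sum_upto_ext. intros i Hi. rewrite f_lam_int by lia. rewrite (binomR_C Lam t Ht). auto.
Qed.

Theorem lemma3 (Lam : nat) (K : nat -> nat) :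
  (1 <= Lam)%nat ->
  convex_on 0 (INR Lam) (f_tot Lam K) /\
  nonincreasing_on 0 (INR Lam) (f_tot Lam K) /\
  (forall t : nat, (t <= Lam)%nat -> f_tot Lam K (INR t) = seq_val Lam K t) /\
  seq_convex_noninc Lam (seq_val Lam K).
Proof.
  intros _. destruct (ftot_good Lam K) as [Hc Hn].
  split; [auto|split; [auto|split; [apply ftot_int|]]].
  split.
  - intros t Ht. rewrite <- !ftot_int by lia.
    apply Hn. split; [apply pos_INR|apply le_INR; lia].
    split; [apply pos_INR|apply le_INR; lia].
    rewrite S_INR; lra.
  - intros t Ht. rewrite <- !ftot_int by lia.
    assert (E : INR (S t) = / 2 * INR t + (1 - / 2) * INR (S (S t)))
      by (rewrite !S_INR; field).
    pose proof (Hc (INR t) (INR (S (S t))) (/ 2)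
      (conj (pos_INR t) (le_INR t Lam ltac:(lia)))
      (conj (pos_INR (S (S t))) (le_INR (S (S t)) Lam ltac:(lia))) ltac:(lra)) as H.
    rewrite <- E in H. lra.
Qed.
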